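(* Let $f:X\to Y$ be an upper $K$-convex function, suppose $D_Y$ is $K$-closed, and let $\bar x\in X$. Then $$\widehat\partial f(\bar x)=\{T\in B(X,Y)\mid f(x)\in f(\bar x)+T(x-\bar x)+K\ \text{ for all } x\in X\}.$$ In particular, if $Y=\mathbb R$ and $K=[0,\infty)$, $\widehat\partial f(\bar x)$ coincides with the classical subdifferential of the convex function $f$ at $\bar x$.
   Context: $X,Y$ are real normed spaces; $B(X,Y)$ is the space of bounded linear operators $X\to Y$; $B(x,\delta)$ is the open ball and $D_Y$ the closed unit ball of $Y$. $K\subset Y$ is a pointed closed convex cone. For $f:X\to Y$ and $\bar x\in X$, $\widehat\partial f(\bar x)$ is the set of all $T\in B(X,Y)$ such that for every $\varepsilon>0$ there is $\delta>0$ with $f(x)+K\subset f(\bar x)+K+T(x-\bar x)+\varepsilon\|x-\bar x\|D_Y$ for all $x\in B(\bar x,\delta)$. $f$ is upper $K$-convex if $\lambda f(x)+(1-\lambda)f(y)\in f(\lambda x+(1-\lambda)y)+K$ for all $x,y\in X$, $\lambda\in(0,1)$. $D_Y$ is $K$-closed means $D_Y+K$ is closed. *)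

(* Defs.v *)
From HB Require Import structures.
From mathcomp Require Import all_boot all_order all_algebra.
From mathcomp Require Import all_classical all_reals all_analysis.
Set Implicit Arguments. Unset Strict Implicit. Unset Printing Implicit Defensive.
Import Order.TTheory GRing.Theory Num.Theory.
Import numFieldNormedType.Exports.
Local Open Scope classical_set_scope.
Local Open Scope ring_scope.

Section Defs.
Variables (R : realType) (X Y : normedModType R).

Definition bounded_linear (T : X -> Y) : Prop :=
  (forall (a : R) (u v : X), T (a *: u + v) = a *: T u + T v) /\
  exists M : R, forall u : X, `|T u| <= M * `|u|.

Definition pointed_closed_convex_cone (K : set Y) : Prop :=
  [/\ K 0,
      (forall (t : R) (k : Y), 0 <= t -> K k -> K (t *: k)),
      (forall (t : R) (k1 k2 : Y), 0 <= t <= 1 -> K k1 -> K k2 ->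
          K (t *: k1 + (1 - t) *: k2)),
      (forall k : Y, K k -> K (- k) -> k = 0)
    & closed K].

Definition unit_ball_K_closed (K : set Y) : Prop :=
  closed [set y : Y | exists d k, `|d| <= 1 /\ K k /\ y = d + k].

Definition upper_K_convex (K : set Y) (f : X -> Y) : Prop :=
  forall (x y : X) (l : R), 0 < l < 1 ->
    exists2 k, K k &
      l *: f x + (1 - l) *: f y = f (l *: x + (1 - l) *: y) + k.

(* T belongs to \hat\partial f(xb):  for every eps>0 there is delta>0 such that
   f(x)+K ⊆ f(xb)+K+T(x-xb)+eps||x-xb|| D_Y  for all x in B(xb,delta) *)
Definition frechet_K_subdiff (K : set Y) (f : X -> Y) (xb : X) : set (X -> Y) :=
  [set T | bounded_linear T /\
     forall eps : R, 0 < eps -> exists2 delta : R, 0 < delta &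
       forall x : X, `|x - xb| < delta ->
         forall k, K k -> exists2 k', K k' & exists2 d : Y, `|d| <= 1 &
           f x + k = f xb + k' + T (x - xb) + (eps * `|x - xb|) *: d].

End Defs.

(* Main.v *)
Require Import Defs.
From HB Require Import structures.
From mathcomp Require Import all_boot all_order all_algebra.
From mathcomp Require Import all_classical all_reals all_analysis.
From mathcomp Require Import lra ring.
Import Order.TTheory GRing.Theory Num.Theory.
Import numFieldNormedType.Exports.
Local Open Scope classical_set_scope.
Local Open Scope ring_scope.

Lemma zid (V : zmodType) (a k k1 w u b : V) :
  a + k + w + u + k1 - (a - b) - b - w = k + k1 + u.
Proof.
rewrite opprB addrA (addrAC _ b (-a)) addrK.
by rewrite (ACl ((1*6)*(3*7)*(2*5*4)))%AC /= !subrr !add0r.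
Qed.

Lemma fld_aux (R : realType) (t e c : R) : t != 0 -> c != 0 ->
  t^-1 * (e / (2 * c) * (t * c)) = e / 2.
Proof.
move=> t0 c0; rewrite mulrCA (mulrA t^-1) mulVf // mul1r.
by rewrite invfM -!mulrA mulVf // mulr1.
Qed.

Lemma cone_add {R : realType} {Y : normedModType R} {K : set Y} :
  pointed_closed_convex_cone K -> forall a b, K a -> K b -> K (a + b).
Proof.
case=> K0 Ks Kc _ _ a b Ka Kb.
have h1 : (0:R) <= 2^-1 by lra.
have h2 : (2^-1:R) <= 1 by lra.
have h : (0 <= (2^-1:R)) && ((2^-1:R) <= 1) by rewrite h1 h2.
have := Kc _ _ _ h Ka Kb.
have -> : 1 - 2^-1 = 2^-1 :> R by rewrite {1}(splitr 1) mul1r addrK.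
move=> /(Ks 2); rewrite ler0n => /(_ isT).
by rewrite scalerDr !scalerA divff ?pnatr_eq0 // !scale1r.
Qed.

Lemma lin0 {R : realType} {X Y : normedModType R} {T : X -> Y} :
  bounded_linear T -> T 0 = 0.
Proof.
case=> lin _; have := lin 1 0 0; rewrite !scale1r !addr0 => h.
by apply: (@addrI _ (T 0)); rewrite addr0 -h.
Qed.

Lemma linZ {R : realType} {X Y : normedModType R} {T : X -> Y} :
  bounded_linear T -> forall a u, T (a *: u) = a *: T u.
Proof.
move=> hT a u; have := hT.1 a u 0; rewrite addr0 => ->.
by rewrite (lin0 hT) addr0.
Qed.

Theorem mainTheorem5 (R : realType) (X Y : normedModType R) (K : set Y)
    (f : X -> Y) (xb : X) :
  pointed_closed_convex_cone K ->
  unit_ball_K_closed K ->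
  upper_K_convex K f ->
  frechet_K_subdiff K f xb =
    [set T : X -> Y | bounded_linear T /\
       forall x : X, exists2 k, K k & f x = f xb + T (x - xb) + k].
Proof.
move=> hK _ hf; apply/seteqP; split => T [hT H]; split => //.
- move=> x.
  pose v := f x - f xb - T (x - xb).
  suff Kv : K v by exists v => //; rewrite /v -addrA [T _ + _]addrC subrK addrC subrK.
  have [exb|xnx] := eqVneq x xb.
    by rewrite /v exb (subrr xb) (lin0 hT) subrr subr0; case: hK.
  set c := `|x - xb|.
  have c0 : 0 < c by rewrite normr_gt0 subr_eq0.
  have Kcl : closed K by case: hK.
  rewrite (closure_id K).1 //.
  move=> B /nbhs_ballP [e /= e0 hB].
  have eps0 : 0 < e / (2 * c) by rewrite divr_gt0 // mulr_gt0.
  have [delta d0 Hd] := H _ eps0.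
  pose t := Num.min (2^-1) (delta / (2 * c)).
  have t0 : 0 < t by rewrite lt_min invr_gt0 ltr0n divr_gt0 // mulr_gt0.
  have t1 : t < 1.
    rewrite /t gt_min; apply/orP; left.
    by rewrite invf_lt1 // ltr1n.
  have tt : 0 < t < 1 by rewrite t0 t1.
  have [k1 Kk1 E1] := hf x xb t tt.
  set xt := t *: x + (1 - t) *: xb in E1.
  have Ext : xt - xb = t *: (x - xb).
    rewrite /xt scalerBr scalerBl scale1r addrCA [in LHS]addrC.
    by rewrite addrK.
  have Nxt : `|xt - xb| = t * c by rewrite Ext normrZ gtr0_norm.
  have tle : t <= delta / (2 * c) by rewrite /t ge_min lexx orbT.
  have tle2 : t * (2 * c) <= delta by rewrite -ler_pdivlMr // mulr_gt0.
  have tcd : `|xt - xb| < delta by rewrite Nxt; nra.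
  have K0 : K 0 by case: hK.
  have [k' Kk' [d nd E2]] := Hd xt tcd 0 K0.
  rewrite addr0 Nxt in E2.
  set s := e / (2 * c) * (t * c) in E2.
  have E : t *: v = k' + k1 + s *: d.
    rewrite /v !scalerBr -(linZ hT) -Ext.
    have -> : t *: f x = f xt + k1 - (1-t) *: f xb by rewrite -E1 addrK.
    rewrite E2 scalerBl scale1r.
    exact: zid.
  have tn0 : t != 0 by rewrite gt_eqF.
  have Ev : v = t^-1 *: (k' + k1) + (t^-1 * s) *: d.
    by rewrite -scalerA -scalerDr -E scalerA mulVf ?scale1r.
  have ts : t^-1 * s = e / 2.
    by rewrite /s fld_aux // gt_eqF.
  have Kkk : K (t^-1 *: (k' + k1)).
    have [_ Ks _ _ _] := hK; apply: Ks; first by rewrite invr_ge0 ltW.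
    exact: cone_add.
  exists (t^-1 *: (k' + k1)); split => //; apply: hB.
  rewrite -ball_normE /= {1}Ev addrAC subrr add0r ts normrZ.
  rewrite ger0_norm; last by rewrite divr_ge0 // ltW.
  have : e / 2 * `|d| <= e / 2 by rewrite ler_piMr // divr_ge0 // ltW.
  lra.
- move=> eps eps0; exists 1 => // x _ k Kk.
  have [k0 Kk0 ->] := H x.
  exists (k0 + k); first exact: cone_add.
  exists 0; first by rewrite normr0.
  by rewrite scaler0 addr0 (addrAC (f xb) (T _) k0) (addrAC _ (T _) k) addrA.
Qed.
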